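(* For every $M\in\Lambda$, the set $\mathcal A(M)$ is either empty or an ideal (i.e. non-empty, directed and downward closed) with respect to $\sqsubseteq$.
   Context: Call-by-value $\lambda$-calculus with permutations: $\lambda$-terms and values are $M,N::=V\mid MN$, $V::=x\mid\lambda x.M$, up to $\alpha$-conversion. Rules: $(\beta_v)$ $(\lambda x.M)V\to M\{x:=V\}$ if $V$ is a value; $(\sigma_1)$ $(\lambda x.M)NP\to(\lambda x.MP)N$ if $x\notin\mathrm{FV}(P)$; $(\sigma_3)$ $V((\lambda x.M)N)\to(\lambda x.VM)N$ if $V$ is a value and $x\notin\mathrm{FV}(V)$. $\to_{\mathsf v}$ is their contextual closure, $\twoheadrightarrow_{\mathsf v}$ its reflexive-transitive closure. $\Lambda_\bot$ is the set of $\lambda$-terms possibly containing a constant $\bot$; $\sqsubseteq$ is the smallest context-closed preorder on $\Lambda_\bot$ with $\bot\sqsubseteq x$ and $\bot\sqsubseteq\lambda x.M$. Approximants $\mathcal A$ ($k\ge0$): $A::=B\mid C$; $B::=x\mid\lambda x.A\mid\bot\mid xBA_1\cdots A_k$; $C::=(\lambda x.A)(yBA_1\cdots A_k)$. $\mathcal A(M)=\{A\in\mathcal A\mid\exists N\in\Lambda,\ M\twoheadrightarrow_{\mathsf v}N,\ A\sqsubseteq N\}$. Directed and downward closed are understood within $\mathcal A$. *)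

(* Defs.v *)
(* Lambda-terms with de Bruijn indices (so terms are
   identified up to alpha-conversion), with an extra constant Bot. *)
From Stdlib Require Import Arith Relations.

Inductive term : Type :=
| Var : nat -> term
| Lam : term -> term
| App : term -> term -> term
| Bot : term.

(* Lambda: terms without Bot *)
Fixpoint bot_free (t : term) : Prop :=
  match t with
  | Var _ => True
  | Lam t => bot_free t
  | App t u => bot_free t /\ bot_free u
  | Bot => False
  end.

Definition is_value (t : term) : Prop :=
  match t with
  | Var _ | Lam _ => True
  | _ => False
  end.

Fixpoint lift (k : nat) (t : term) : term :=
  match t with
  | Var n => if k <=? n then Var (S n) else Var n
  | Lam t => Lam (lift (S k) t)
  | App t u => App (lift k t) (lift k u)
  | Bot => Bot
  end.

Fixpoint subst (k : nat) (u : term) (t : term) : term :=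
  match t with
  | Var n =>
      if n =? k then u
      else if k <? n then Var (pred n) else Var n
  | Lam t => Lam (subst (S k) (lift 0 u) t)
  | App t1 t2 => App (subst k u t1) (subst k u t2)
  | Bot => Bot
  end.

(* One-step reduction ->_v: contextual closure of beta_v, sigma_1, sigma_3.
   The side conditions x notin FV(P) / FV(V) are realised by lifting. *)
Inductive step : term -> term -> Prop :=
| step_betav : forall M V, is_value V -> step (App (Lam M) V) (subst 0 V M)
| step_sigma1 : forall M N P,
    step (App (App (Lam M) N) P) (App (Lam (App M (lift 0 P))) N)
| step_sigma3 : forall V M N, is_value V ->
    step (App V (App (Lam M) N)) (App (Lam (App (lift 0 V) M)) N)
| step_lam : forall M M', step M M' -> step (Lam M) (Lam M')
| step_appl : forall M M' N, step M M' -> step (App M N) (App M' N)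
| step_appr : forall M N N', step N N' -> step (App M N) (App M N').

Definition red : term -> term -> Prop := clos_refl_trans term step.

Inductive le_bot : term -> term -> Prop :=
| le_refl : forall M, le_bot M M
| le_trans : forall M N P, le_bot M N -> le_bot N P -> le_bot M P
| le_bot_var : forall n, le_bot Bot (Var n)
| le_bot_lam : forall M, le_bot Bot (Lam M)
| le_ctx_lam : forall M M', le_bot M M' -> le_bot (Lam M) (Lam M')
| le_ctx_appl : forall M M' N, le_bot M M' -> le_bot (App M N) (App M' N)
| le_ctx_appr : forall M N N', le_bot N N' -> le_bot (App M N) (App M N').

(* Approximants.  isN t  <->  t = x B A1 ... Ak  (k >= 0). *)
Inductive isA : term -> Prop :=
| A_B : forall t, isB t -> isA t
| A_C : forall a n, isA a -> isN n -> isA (App (Lam a) n)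
with isB : term -> Prop :=
| B_var : forall x, isB (Var x)
| B_lam : forall a, isA a -> isB (Lam a)
| B_bot : isB Bot
| B_neu : forall n, isN n -> isB n
with isN : term -> Prop :=
| N_head : forall x b, isB b -> isN (App (Var x) b)
| N_app : forall n a, isN n -> isA a -> isN (App n a).

Definition approx (M : term) (A : term) : Prop :=
  isA A /\ exists N, bot_free N /\ red M N /\ le_bot A N.

(* Directedness and downward closure, understood within the approximants *)
Definition directed (S : term -> Prop) : Prop :=
  forall A1 A2, S A1 -> S A2 ->
    exists A3, S A3 /\ le_bot A1 A3 /\ le_bot A2 A3.

Definition downward_closed (S : term -> Prop) : Prop :=
  forall A A', S A -> isA A' -> le_bot A' A -> S A'.

Definition ideal (S : term -> Prop) : Prop :=
  (exists A, S A) /\ directed S /\ downward_closed S.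

(* Main.v *)
Require Import Defs.
From Stdlib Require Import Arith Lia Relations Classical.

Ltac dec := repeat (cbn [lift subst pred] in *; match goal with
 | |- context[?a <=? ?b] => destruct (Nat.leb_spec a b)
 | |- context[?a =? ?b] => destruct (Nat.eqb_spec a b)
 | |- context[?a <? ?b] => destruct (Nat.ltb_spec a b)
 end); try (exfalso; lia); try reflexivity; try (f_equal; lia).

Lemma lift_lift : forall t k j, k <= j -> lift k (lift j t) = lift (S j) (lift k t).
Proof.
  induction t; intros k j H; cbn [lift subst].
  - dec.
  - f_equal. apply IHt. lia.
  - f_equal; auto.
  - reflexivity.
Qed.

Lemma subst_lift : forall t k u, subst k u (lift k t) = t.
Proof.
  induction t; intros k u; cbn [lift subst].
  - dec.
  - f_equal. apply IHt.
  - f_equal; auto.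
  - reflexivity.
Qed.

Lemma lift_subst1 : forall t i k u, i <= k ->
  lift k (subst i u t) = subst i (lift k u) (lift (S k) t).
Proof.
  induction t; intros i k u H; cbn [lift subst].
  - dec.
  - f_equal. rewrite IHt by lia. f_equal. symmetry. apply lift_lift. lia.
  - f_equal; auto.
  - reflexivity.
Qed.

Lemma lift_subst2 : forall t k j u, k <= j ->
  lift k (subst j u t) = subst (S j) (lift k u) (lift k t).
Proof.
  induction t; intros k j u H; cbn [lift subst].
  - dec.
  - f_equal. rewrite IHt by lia. f_equal. symmetry. apply lift_lift. lia.
  - f_equal; auto.
  - reflexivity.
Qed.

Lemma subst_subst : forall t i j u v, i <= j ->
  subst j v (subst i u t) = subst i (subst j v u) (subst (S j) (lift i v) t).
Proof.
  induction t; intros i j u v H; cbn [lift subst].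
  - dec; try rewrite subst_lift; reflexivity.
  - f_equal. rewrite IHt by lia. f_equal.
    + symmetry; apply lift_subst2. lia.
    + f_equal. symmetry. apply lift_lift. lia.
  - f_equal; auto.
  - reflexivity.
Qed.
Inductive stepb : term -> term -> Prop :=
| sb_beta : forall M V, is_value V -> stepb (App (Lam M) V) (subst 0 V M)
| sb_lam : forall M M', stepb M M' -> stepb (Lam M) (Lam M')
| sb_appl : forall M M' N, stepb M M' -> stepb (App M N) (App M' N)
| sb_appr : forall M N N', stepb N N' -> stepb (App M N) (App M N').

Inductive steps : term -> term -> Prop :=
| ss_1 : forall M N P,
    steps (App (App (Lam M) N) P) (App (Lam (App M (lift 0 P))) N)
| ss_3 : forall V M N, is_value V ->
    steps (App V (App (Lam M) N)) (App (Lam (App (lift 0 V) M)) N)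
| ss_lam : forall M M', steps M M' -> steps (Lam M) (Lam M')
| ss_appl : forall M M' N, steps M M' -> steps (App M N) (App M' N)
| ss_appr : forall M N N', steps N N' -> steps (App M N) (App M N').

Lemma step_union : forall M N, step M N <-> stepb M N \/ steps M N.
Proof.
  split.
  - induction 1; try (left; constructor; assumption); try (right; constructor; assumption);
    intuition (constructor; assumption).
  - intros [H|H]; induction H; constructor; assumption.
Qed.

Lemma value_lift : forall V k, is_value V -> is_value (lift k V).
Proof. destruct V; simpl; intros; try tauto. destruct (k <=? n); exact I. Qed.

Lemma value_subst : forall V k u, is_value V -> is_value u -> is_value (subst k u V).
Proof. destruct V; simpl; intros; try tauto.
  destruct (n =? k); auto. destruct (k <? n); exact I. Qed.

Lemma stepb_value : forall V V', stepb V V' -> is_value V -> is_value V'.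
Proof. destruct 1; simpl; tauto. Qed.
Lemma steps_value : forall V V', steps V V' -> is_value V -> is_value V'.
Proof. destruct 1; simpl; tauto. Qed.

Lemma lift_stepb : forall M M', stepb M M' -> forall k, stepb (lift k M) (lift k M').
Proof.
  induction 1; intros k; cbn [lift]; try (constructor; auto; fail).
  rewrite lift_subst1 by lia. constructor. apply value_lift; auto.
Qed.

Lemma lift_steps : forall M M', steps M M' -> forall k, steps (lift k M) (lift k M').
Proof.
  induction 1; intros k; cbn [lift]; try (constructor; auto; fail).
  - rewrite <- lift_lift by lia. constructor.
  - rewrite <- lift_lift by lia. constructor. apply value_lift; auto.
Qed.

Lemma subst_steps : forall M M', steps M M' -> forall k u, is_value u ->
  steps (subst k u M) (subst k u M').
Proof.
  induction 1; intros k u Hu; cbn [subst]; try (constructor; auto using value_lift; fail).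
  - rewrite <- lift_subst2 by lia. constructor.
  - rewrite <- lift_subst2 by lia. constructor. apply value_subst; auto.
Qed.

Definition rts := clos_refl_trans term steps.
Definition rtb := clos_refl_trans term stepb.

Lemma rt_map : forall (R : relation term) (f : term -> term),
  (forall x y, R x y -> R (f x) (f y)) ->
  forall x y, clos_refl_trans term R x y -> clos_refl_trans term R (f x) (f y).
Proof.
  intros R f Hf x y H; induction H.
  - apply rt_step; auto.
  - apply rt_refl.
  - eapply rt_trans; eauto.
Qed.

Lemma rts_app : forall M M' N N', rts M M' -> rts N N' -> rts (App M N) (App M' N').
Proof.
  intros. eapply rt_trans.
  - apply (rt_map steps (fun x => App x N)); [intros; constructor; auto| exact H].
  - apply (rt_map steps (fun x => App M' x)); [intros; constructor; auto| exact H0].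
Qed.
Lemma rts_lam : forall M M', rts M M' -> rts (Lam M) (Lam M').
Proof. intros. apply (rt_map steps Lam); [intros; constructor; auto| exact H]. Qed.

Lemma subst_steps_arg : forall M k V V', steps V V' -> rts (subst k V M) (subst k V' M).
Proof.
  induction M; intros k V V' H; cbn [subst].
  - destruct (n =? k). apply rt_step; auto. apply rt_refl.
  - apply rts_lam. apply IHM. apply lift_steps. auto.
  - apply rts_app; auto.
  - apply rt_refl.
Qed.
Inductive par : term -> term -> Prop :=
| p_var : forall n, par (Var n) (Var n)
| p_bot : par Bot Bot
| p_lam : forall M M', par M M' -> par (Lam M) (Lam M')
| p_app : forall M M' N N', par M M' -> par N N' -> par (App M N) (App M' N')
| p_beta : forall M M' V V', par M M' -> par V V' -> is_value V ->
    par (App (Lam M) V) (subst 0 V' M').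

Lemma par_refl : forall M, par M M.
Proof. induction M; constructor; auto. Qed.

Lemma par_value : forall V V', par V V' -> is_value V -> is_value V'.
Proof. destruct 1; simpl; tauto. Qed.

Lemma par_lift : forall M M', par M M' -> forall k, par (lift k M) (lift k M').
Proof.
  induction 1; intros k; cbn [lift]; try (constructor; auto; fail).
  - destruct (k <=? n); constructor.
  - rewrite lift_subst1 by lia. constructor; auto. apply value_lift; auto.
Qed.

Lemma par_subst : forall M M', par M M' -> forall k V V', par V V' -> is_value V ->
  par (subst k V M) (subst k V' M').
Proof.
  induction 1; intros k W W' HW HWv; cbn [subst]; try (constructor; auto; fail).
  all: try (destruct (n =? k); auto; destruct (k <? n); constructor).
  all: try (constructor; apply IHpar; auto using par_lift, value_lift; fail).
  rewrite subst_subst by lia. constructor; auto using par_lift, value_lift, value_subst.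
    all: apply IHpar1; auto using par_lift, value_lift.
Qed.

Lemma par_diamond : forall M M1, par M M1 -> forall M2, par M M2 ->
  exists M3, par M1 M3 /\ par M2 M3.
Proof.
  induction 1; intros M2 H2.
  - inversion H2; subst. exists (Var n); split; constructor.
  - inversion H2; subst. exists Bot; split; constructor.
  - inversion H2; subst. destruct (IHpar _ H1) as [M3 [? ?]].
    exists (Lam M3); split; constructor; auto.
  - inversion H2; subst.
    + destruct (IHpar1 _ H4) as [A [? ?]]. destruct (IHpar2 _ H6) as [B [? ?]].
      exists (App A B); split; constructor; auto.
    + inversion H; subst.
      match goal with Hm : par M0 ?X |- context[subst 0 _ ?X] =>
        destruct (IHpar1 (Lam X)) as [A [HA1 HA2]]; [constructor; auto|] end.
      destruct (IHpar2 _ H5) as [B [? ?]].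
      inversion HA1; subst. inversion HA2; subst.
      match goal with Hx : par _ ?X, Hy : par _ ?X |- _ => exists (subst 0 B X) end. split.
      * constructor; auto. eapply par_value; eauto.
      * apply par_subst; auto. eapply par_value; eauto.
  - inversion H2; subst.
    + inversion H5; subst.
      destruct (IHpar1 _ H4) as [A [? ?]]. destruct (IHpar2 _ H7) as [B [? ?]].
      exists (subst 0 B A). split.
      * apply par_subst; auto. eapply par_value; eauto.
      * constructor; auto. eapply par_value; eauto.
    + destruct (IHpar1 _ H5) as [A [? ?]]. destruct (IHpar2 _ H6) as [B [? ?]].
      exists (subst 0 B A). split; apply par_subst; auto; eapply par_value; eauto.
Qed.

Lemma stepb_par : forall M N, stepb M N -> par M N.
Proof. induction 1; constructor; auto using par_refl. Qed.

Lemma par_rtb : forall M N, par M N -> rtb M N.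
Proof.
  induction 1.
  - apply rt_refl.
  - apply rt_refl.
  - apply (rt_map stepb Lam); [intros; constructor; auto | auto].
  - eapply rt_trans.
    + apply (rt_map stepb (fun x => App x N)); [intros; constructor; auto| exact IHpar1].
    + apply (rt_map stepb (fun x => App M' x)); [intros; constructor; auto| exact IHpar2].
  - eapply rt_trans. eapply rt_trans.
    + apply (rt_map stepb (fun x => App (Lam x) V)); [intros; repeat constructor; auto| exact IHpar1].
    + apply (rt_map stepb (fun x => App (Lam M') x)); [intros; constructor; auto| exact IHpar2].
    + apply rt_step. constructor. eapply par_value; eauto.
Qed.

Section Diamond.
Variable R : relation term.
Hypothesis Hd : forall a b c, R a b -> R a c -> exists d, R b d /\ R c d.
Lemma strip : forall a c, clos_refl_trans_1n term R a c -> forall b, R a b ->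
  exists d, clos_refl_trans_1n term R b d /\ R c d.
Proof.
  induction 1; intros b Hb.
  - exists b. split; [constructor| auto].
  - destruct (Hd _ _ _ H Hb) as [d1 [? ?]].
    destruct (IHclos_refl_trans_1n _ H1) as [d [? ?]].
    exists d. split; auto. econstructor; eauto.
Qed.
Lemma diamond_confl : forall a b, clos_refl_trans_1n term R a b -> forall c,
  clos_refl_trans_1n term R a c ->
  exists d, clos_refl_trans_1n term R b d /\ clos_refl_trans_1n term R c d.
Proof.
  induction 1; intros c Hc.
  - exists c; split; auto. constructor.
  - destruct (strip _ _ Hc _ H) as [d1 [? ?]].
    destruct (IHclos_refl_trans_1n _ H1) as [d [? ?]].
    exists d; split; auto. econstructor; eauto.
Qed.
End Diamond.

Lemma rtb_par : forall M N, rtb M N -> clos_refl_trans_1n term par M N.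
Proof.
  intros M N H. apply clos_rt_rt1n_iff in H. induction H.
  - constructor.
  - econstructor; eauto using stepb_par.
Qed.
Lemma parstar_rtb : forall M N, clos_refl_trans_1n term par M N -> rtb M N.
Proof.
  induction 1. apply rt_refl. eapply rt_trans. apply par_rtb; eauto. auto.
Qed.

Lemma confl_b : forall a b c, rtb a b -> rtb a c -> exists d, rtb b d /\ rtb c d.
Proof.
  intros a b c H1 H2. apply rtb_par in H1. apply rtb_par in H2.
  destruct (diamond_confl par (fun a b c h1 h2 => par_diamond a b h1 c h2) _ _ H1 _ H2) as [d [? ?]].
  exists d; split; apply parstar_rtb; auto.
Qed.
Fixpoint sz (t : term) : nat :=
  match t with
  | Var _ => 2 | Bot => 2 | Lam m => sz m + 1 | App a b => sz a * sz b end.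

Lemma sz_ge2 : forall t, 2 <= sz t.
Proof. induction t; simpl; nia. Qed.

Lemma sz_lift : forall t k, sz (lift k t) = sz t.
Proof. induction t; intros k; simpl; auto. destruct (k <=? n); auto. Qed.

Lemma steps_sz : forall a b, steps a b -> sz b < sz a.
Proof.
  induction 1; simpl; rewrite ?sz_lift.
  - pose proof (sz_ge2 M); pose proof (sz_ge2 N); pose proof (sz_ge2 P). nia.
  - pose proof (sz_ge2 M); pose proof (sz_ge2 N); pose proof (sz_ge2 V). nia.
  - lia.
  - pose proof (sz_ge2 N). nia.
  - pose proof (sz_ge2 M). nia.
Qed.

Ltac s1 := apply rt_step.

Lemma lc_root1 : forall M N P c, steps (App (App (Lam M) N) P) c ->
  exists d, rts (App (Lam (App M (lift 0 P))) N) d /\ rts c d.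
Proof.
  intros M N P c H. inversion H; subst.
  - eexists; split; apply rt_refl.
  - simpl in *; contradiction.
  - inversion H3; subst.
    + eexists; split.
      * s1. apply ss_3. exact I.
      * eapply rt_trans. s1. apply ss_1.
        s1. apply ss_appl. apply ss_lam. cbn [lift]. rewrite <- lift_lift by lia. apply ss_1.
    + inversion H4; subst. eexists; split.
      * s1. apply ss_appl. apply ss_lam. apply ss_appl. eassumption.
      * s1. apply ss_1.
    + eexists; split.
      * s1. apply ss_appr. eassumption.
      * s1. apply ss_1.
  - eexists; split.
    + s1. apply ss_appl. apply ss_lam. apply ss_appr. apply lift_steps. eassumption.
    + s1. apply ss_1.
Qed.

Lemma lc_root3 : forall V M N c, is_value V -> steps (App V (App (Lam M) N)) c ->
  exists d, rts (App (Lam (App (lift 0 V) M)) N) d /\ rts c d.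
Proof.
  intros V M N c HV H. inversion H; subst.
  - simpl in *; contradiction.
  - eexists; split; apply rt_refl.
  - eexists; split.
    + s1. apply ss_appl. apply ss_lam. apply ss_appl. apply lift_steps. eassumption.
    + s1. apply ss_3. eapply steps_value; eauto.
  - inversion H3; subst.
    + eexists; split.
      * s1. apply ss_3. exact I.
      * eapply rt_trans. s1. apply ss_3. auto.
        s1. apply ss_appl. apply ss_lam. cbn [lift]. rewrite <- lift_lift by lia. apply ss_3.
        apply value_lift; auto.
    + inversion H4; subst. eexists; split.
      * s1. apply ss_appl. apply ss_lam. apply ss_appr. eassumption.
      * s1. apply ss_3. auto.
    + eexists; split.
      * s1. apply ss_appr. eassumption.
      * s1. apply ss_3. auto.
Qed.

Lemma lc_s : forall a b, steps a b -> forall c, steps a c ->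
  exists d, rts b d /\ rts c d.
Proof.
  induction 1; intros c H2.
  - apply lc_root1; auto.
  - apply lc_root3; auto.
  - inversion H2; subst. destruct (IHsteps _ H1) as [d [? ?]].
    exists (Lam d); split; apply rts_lam; auto.
  - pose proof (ss_appl _ _ N H) as Ha. inversion H2; subst.
    + destruct (lc_root1 _ _ _ _ Ha) as [d [? ?]]. exists d; split; auto.
    + destruct (lc_root3 _ _ _ _ H4 Ha) as [d [? ?]]. exists d; split; auto.
    + destruct (IHsteps _ H4) as [d [? ?]].
      exists (App d N); split; apply rts_app; auto; apply rt_refl.
    + exists (App M' N'); split; apply rts_app; try apply rt_refl; s1; auto.
  - pose proof (ss_appr M _ _ H) as Ha. inversion H2; subst.
    + destruct (lc_root1 _ _ _ _ Ha) as [d [? ?]]. exists d; split; auto.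
    + destruct (lc_root3 _ _ _ _ H4 Ha) as [d [? ?]]. exists d; split; auto.
    + exists (App M' N'); split; apply rts_app; try apply rt_refl; s1; auto.
    + destruct (IHsteps _ H4) as [d [? ?]].
      exists (App M d); split; apply rts_app; auto; apply rt_refl.
Qed.

Lemma rts_sz : forall a b, rts a b -> sz b <= sz a.
Proof.
  induction 1; auto. apply steps_sz in H; lia. lia.
Qed.

Lemma confl_s_n : forall n a, sz a < n -> forall b c, rts a b -> rts a c ->
  exists d, rts b d /\ rts c d.
Proof.
  induction n; intros a Ha b c Hb Hc. lia.
  apply clos_rt_rt1n_iff in Hb. destruct Hb as [|a1 b Ha1 Hb].
  - exists c; split; auto. apply rt_refl.
  - apply clos_rt_rt1n_iff in Hc. destruct Hc as [|a2 c Ha2 Hc].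
    + exists b; split. apply rt_refl. eapply rt_trans. s1; eauto. apply clos_rt_rt1n_iff; auto.
    + apply clos_rt_rt1n_iff in Hb. apply clos_rt_rt1n_iff in Hc.
      destruct (lc_s _ _ Ha1 _ Ha2) as [e [He1 He2]].
      pose proof (steps_sz _ _ Ha1). pose proof (steps_sz _ _ Ha2).
      destruct (IHn a1 ltac:(lia) _ _ Hb He1) as [f [Hf1 Hf2]].
      destruct (IHn a2 ltac:(lia) c f Hc (rt_trans _ _ _ _ _ He2 Hf2)) as [g [Hg1 Hg2]].
      exists g; split; auto. eapply rt_trans; eauto.
Qed.

Lemma confl_s : forall a b c, rts a b -> rts a c -> exists d, rts b d /\ rts c d.
Proof. intros a. apply (confl_s_n (S (sz a))). lia. Qed.
Lemma beta_eq : forall M V t, is_value V -> subst 0 V M = t -> stepb (App (Lam M) V) t.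
Proof. intros; subst; constructor; auto. Qed.

Ltac b1 := right.

Lemma comm_bs : forall a b, stepb a b -> forall c, steps a c ->
  exists d, rts b d /\ (c = d \/ stepb c d).
Proof.
  induction 1; intros c H2.
  - inversion H2; subst.
    + simpl in *; contradiction.
    + inversion H4; subst. eexists; split.
      * s1. apply subst_steps; eauto.
      * b1. constructor; auto.
    + eexists; split.
      * apply subst_steps_arg; eauto.
      * b1. constructor. eapply steps_value; eauto.
  - inversion H2; subst. destruct (IHstepb _ H1) as [d [? Hd]].
    exists (Lam d); split. apply rts_lam; auto.
    destruct Hd; [left; subst; auto | right; constructor; auto].
  - pose proof (sb_appl _ _ N H) as Ha. inversion H2; subst.
    + inversion H; subst.
      * match goal with |- exists d, rts ?b d /\ _ => exists b end. split. apply rt_refl.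
        b1. apply beta_eq; auto. cbn [subst]. rewrite subst_lift. auto.
      * inversion H4; subst. eexists; split.
        -- s1. apply ss_1.
        -- b1. apply sb_appl. apply sb_lam. apply sb_appl. eassumption.
      * eexists; split.
        -- s1. apply ss_1.
        -- b1. apply sb_appr. eassumption.
    + eexists; split.
      * s1. apply ss_3. eapply stepb_value; eauto.
      * b1. apply sb_appl. apply sb_lam. apply sb_appl. apply lift_stepb. eassumption.
    + destruct (IHstepb _ H4) as [d [? Hd]].
      exists (App d N); split. apply rts_app; auto; apply rt_refl.
      destruct Hd; [left; subst; auto | right; constructor; auto].
    + exists (App M' N'); split. s1; constructor; auto. b1; constructor; auto.
  - pose proof (sb_appr M _ _ H) as Ha. inversion H2; subst.
    + eexists; split.
      * s1. apply ss_1.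
      * b1. apply sb_appl. apply sb_lam. apply sb_appr. apply lift_stepb. eassumption.
    + inversion H; subst.
      * match goal with |- exists d, rts ?b d /\ _ => exists b end. split. apply rt_refl.
        b1. apply beta_eq; auto. cbn [subst]. rewrite subst_lift. auto.
      * inversion H5; subst. eexists; split.
        -- s1. apply ss_3; auto.
        -- b1. apply sb_appl. apply sb_lam. apply sb_appr. eassumption.
      * eexists; split.
        -- s1. apply ss_3; auto.
        -- b1. apply sb_appr. eassumption.
    + exists (App M' N'); split. s1; constructor; auto. b1; constructor; auto.
    + destruct (IHstepb _ H4) as [d [? Hd]].
      exists (App M d); split. apply rts_app; auto; apply rt_refl.
      destruct Hd; [left; subst; auto | right; constructor; auto].
Qed.

Lemma comm1 : forall a c, clos_refl_trans_1n term steps a c -> forall b, stepb a b ->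
  exists d, rts b d /\ (c = d \/ stepb c d).
Proof.
  induction 1; intros b Hb.
  - exists b; split. apply rt_refl. right; auto.
  - destruct (comm_bs _ _ Hb _ H) as [d1 [Hd1 [E|E]]].
    + subst. exists z; split. eapply rt_trans; eauto. apply clos_rt_rt1n_iff; auto. left; auto.
    + destruct (IHclos_refl_trans_1n _ E) as [d [? ?]].
      exists d; split; auto. eapply rt_trans; eauto.
Qed.

Lemma comm : forall a b, clos_refl_trans_1n term stepb a b -> forall c, rts a c ->
  exists d, rts b d /\ rtb c d.
Proof.
  induction 1; intros c Hc.
  - exists c; split; auto. apply rt_refl.
  - apply clos_rt_rt1n_iff in Hc.
    destruct (comm1 _ _ Hc _ H) as [d1 [Hd1 E]].
    destruct (IHclos_refl_trans_1n _ Hd1) as [d [? ?]].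
    exists d; split; auto. destruct E. subst; auto. eapply rt_trans; eauto. s1; auto.
Qed.

Definition T (a b : term) : Prop := rtb a b \/ rts a b.

Lemma T_diamond : forall a b c, T a b -> T a c -> exists d, T b d /\ T c d.
Proof.
  intros a b c [H1|H1] [H2|H2].
  - destruct (confl_b _ _ _ H1 H2) as [d [? ?]]. exists d; split; left; auto.
  - apply clos_rt_rt1n_iff in H1. destruct (comm _ _ H1 _ H2) as [d [? ?]].
    exists d; split; [right|left]; auto.
  - apply clos_rt_rt1n_iff in H2. destruct (comm _ _ H2 _ H1) as [d [? ?]].
    exists d; split; [left|right]; auto.
  - destruct (confl_s _ _ _ H1 H2) as [d [? ?]]. exists d; split; right; auto.
Qed.

Lemma red_T : forall a b, red a b -> clos_refl_trans_1n term T a b.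
Proof.
  intros a b H. apply clos_rt_rt1n_iff in H. induction H.
  - constructor.
  - econstructor; eauto. apply step_union in H. destruct H; [left|right]; s1; auto.
Qed.

Lemma red_app : forall M M' N N', red M M' -> red N N' -> red (App M N) (App M' N').
Proof.
  intros. eapply rt_trans.
  - apply (rt_map step (fun x => App x N)); [intros; constructor; auto| exact H].
  - apply (rt_map step (fun x => App M' x)); [intros; constructor; auto| exact H0].
Qed.

Lemma rtb_red : forall a b, rtb a b -> red a b.
Proof. induction 1. s1. apply step_union; auto. apply rt_refl. eapply rt_trans; eauto. Qed.
Lemma rts_red : forall a b, rts a b -> red a b.
Proof. induction 1. s1. apply step_union; auto. apply rt_refl. eapply rt_trans; eauto. Qed.

Lemma T_red : forall a b, clos_refl_trans_1n term T a b -> red a b.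
Proof.
  induction 1. apply rt_refl. eapply rt_trans; eauto.
  destruct H; [apply rtb_red | apply rts_red]; auto.
Qed.

Lemma confluence : forall a b c, red a b -> red a c -> exists d, red b d /\ red c d.
Proof.
  intros a b c H1 H2. apply red_T in H1. apply red_T in H2.
  destruct (diamond_confl T T_diamond _ _ H1 _ H2) as [d [? ?]].
  exists d; split; apply T_red; auto.
Qed.
Inductive le_s : term -> term -> Prop :=
| ls_botbot : le_s Bot Bot
| ls_botv : forall t, is_value t -> le_s Bot t
| ls_var : forall n, le_s (Var n) (Var n)
| ls_lam : forall a b, le_s a b -> le_s (Lam a) (Lam b)
| ls_app : forall a1 a2 b1 b2, le_s a1 b1 -> le_s a2 b2 -> le_s (App a1 a2) (App b1 b2).

Lemma le_s_refl : forall t, le_s t t.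
Proof. induction t; constructor; auto. Qed.

Lemma le_s_value : forall a b, le_s a b -> is_value a -> is_value b.
Proof. destruct 1; simpl; tauto. Qed.

Lemma le_s_trans : forall a b, le_s a b -> forall c, le_s b c -> le_s a c.
Proof.
  induction 1; intros c Hc.
  - auto.
  - constructor. eapply le_s_value; eauto.
  - auto.
  - inversion Hc; subst. constructor; auto.
  - inversion Hc; subst. constructor; auto.
Qed.

Lemma le_bot_s : forall a b, le_bot a b -> le_s a b.
Proof.
  induction 1.
  - apply le_s_refl.
  - eapply le_s_trans; eauto.
  - constructor; exact I.
  - constructor; exact I.
  - constructor; auto.
  - constructor; auto using le_s_refl.
  - constructor; auto using le_s_refl.
Qed.

Lemma le_s_bot : forall a b, le_s a b -> le_bot a b.
Proof.
  induction 1.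
  - apply le_refl.
  - destruct t; simpl in H; try contradiction; constructor.
  - apply le_refl.
  - constructor; auto.
  - eapply le_trans. apply le_ctx_appl; eauto. apply le_ctx_appr; eauto.
Qed.

Lemma bf_lift : forall t k, bot_free t -> bot_free (lift k t).
Proof. induction t; intros k H; simpl in *; try tauto. destruct (k <=? n); exact I. auto. split; [apply IHt1|apply IHt2]; tauto. Qed.

Lemma bf_subst : forall t k u, bot_free t -> bot_free u -> bot_free (subst k u t).
Proof.
  induction t; intros k u H Hu; simpl in *; try tauto.
  - destruct (n =? k); auto. destruct (k <? n); exact I.
  - apply IHt; auto using bf_lift.
  - split; [apply IHt1|apply IHt2]; tauto.
Qed.

Lemma bf_step : forall a b, step a b -> bot_free a -> bot_free b.
Proof.
  induction 1; simpl; intros; try tauto.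
  - apply bf_subst; tauto.
  - repeat split; try tauto. apply bf_lift; tauto.
  - repeat split; try tauto. apply bf_lift; tauto.
Qed.

Lemma bf_red : forall a b, red a b -> bot_free a -> bot_free b.
Proof. induction 1; eauto using bf_step. Qed.

Lemma isA_lam : forall a, isA (Lam a) -> isA a.
Proof. intros a H. inversion H; subst. inversion H0; subst; auto. inversion H1. Qed.

Lemma isN_app : forall a b, isN (App a b) -> isA a /\ isA b.
Proof.
  intros a b H. inversion H; subst.
  - split. repeat constructor. constructor; auto.
  - split. apply A_B, B_neu; auto. auto.
Qed.

Lemma isA_app : forall a b, isA (App a b) -> isA a /\ isA b.
Proof.
  intros a b H. inversion H; subst.
  - inversion H0; subst. apply isN_app; auto.
  - split. constructor; constructor; auto. apply A_B, B_neu; auto.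
Qed.

Lemma isN_le_value : forall a v, isN a -> le_s a v -> is_value v -> False.
Proof. intros a v H1 H2 H3. inversion H1; subst; inversion H2; subst; simpl in H3; auto. Qed.

Ltac inv_all := repeat match goal with
 | H1 : isN ?a, H2 : le_s ?a ?v, H3 : is_value ?v |- _ => exfalso; apply (isN_le_value _ _ H1 H2 H3)
 | H : le_s ?x (Lam _) |- _ => is_var x; inversion H; subst; clear H
 | H : le_s (App _ _) _ |- _ => inversion H; subst; clear H
 | H : le_s (Lam _) _ |- _ => inversion H; subst; clear H
 | H : le_s (Var _) _ |- _ => inversion H; subst; clear H
 | H : le_s _ (App _ _) |- _ => inversion H; subst; clear H
 | H : is_value (App _ _) |- _ => destruct H
 | H : is_value Bot |- _ => destruct H
 | H : isA (App _ _) |- _ => inversion H; subst; clear H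
 | H : isB (App _ _) |- _ => inversion H; subst; clear H
 | H : isN (App _ _) |- _ => inversion H; subst; clear H
 | H : isN (Lam _) |- _ => inversion H
 | H : isN (Var _) |- _ => inversion H
 | H : isN Bot |- _ => inversion H
 end.

Lemma mono_step : forall N N', step N N' -> forall A, isA A -> le_s A N -> le_s A N'.
Proof.
  induction 1; intros A HA HL.
  - inv_all.
  - inv_all.
  - inv_all.
  - inversion HL; subst. constructor; exact I. constructor. apply IHstep; auto.
    apply isA_lam; auto.
  - inversion HL; subst. simpl in *; contradiction.
    destruct (isA_app _ _ HA). constructor; auto.
  - inversion HL; subst. simpl in *; contradiction.
    destruct (isA_app _ _ HA). constructor; auto.
Qed.
Fixpoint join (a b : term) : term :=
 match a, b with
 | Bot, _ => b
 | _, Bot => a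
 | Lam x, Lam y => Lam (join x y)
 | App x1 x2, App y1 y2 => App (join x1 y1) (join x2 y2)
 | _, _ => a
 end.

Lemma bot_le_any : forall N b, le_s Bot N -> le_s b N -> le_s Bot b.
Proof.
  intros N b H1 H2. inversion H1; subst.
  - inversion H2; subst; constructor.
  - inversion H2; subst; try constructor; simpl in *; auto; contradiction.
Qed.

Lemma join_le : forall a N, le_s a N -> forall b, le_s b N ->
  le_s a (join a b) /\ le_s b (join a b) /\ le_s (join a b) N.
Proof.
  induction 1; intros b0 Hb.
  - simpl. split. eapply bot_le_any; eauto. constructor. split; auto using le_s_refl.
  - simpl. split. eapply bot_le_any; eauto. constructor; auto. split; auto using le_s_refl.
  - inversion Hb; subst; simpl; repeat split; constructor; exact I.
  - inversion Hb; subst; simpl.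
    + repeat split; auto using le_s_refl. constructor; exact I. constructor; auto.
    + destruct (IHle_s _ H2) as [? [? ?]]. repeat split; constructor; auto.
  - inversion Hb; subst; simpl.
    + simpl in *; contradiction.
    + destruct (IHle_s1 _ H4) as [? [? ?]]. destruct (IHle_s2 _ H5) as [? [? ?]].
      repeat split; constructor; auto.
Qed.

Ltac inv_all2 := repeat match goal with
 | H : le_s ?x (Var _) |- _ => is_var x; inversion H; subst; clear H
 | H : le_s (Var _) _ |- _ => inversion H; subst; clear H
 | H : le_s ?x (Lam _) |- _ => is_var x; inversion H; subst; clear H
 | H : le_s (Lam _) _ |- _ => inversion H; subst; clear H
 | H : le_s (App _ _) _ |- _ => inversion H; subst; clear H
 | H : isN (Lam _) |- _ => inversion H
 | H : isN (Var _) |- _ => inversion H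
 | H : isN Bot |- _ => inversion H
 end.

Ltac vv := match goal with
  | H1 : le_s (Var _) ?b, H2 : le_s (Var _) ?b |- _ => inversion H1; subst; inversion H2; subst
  end.
Ltac kill := exfalso; repeat match goal with
  | H : le_s (Var _) ?b |- _ => is_var b; inversion H; subst; clear H
  | Hn : isN ?z, Hl : le_s ?z (Var _) |- _ => inversion Hn; subst; inversion Hl
  end.
Ltac killA := exfalso; repeat match goal with
  | H : le_s (Lam _) ?b |- _ => is_var b; inversion H; subst; clear H
  | H : isB (App _ _) |- _ => inversion H; subst; clear H
  | H : isN (App _ _) |- _ => inversion H; subst; clear H
  | Hn : isN ?z, Hl : le_s ?z (Lam _) |- _ => inversion Hn; subst; inversion Hl
  | Hl : le_s (Var _) (Lam _) |- _ => inversion Hl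
  end.

Lemma join_is : forall a N, le_s a N -> forall b, le_s b N ->
  (isA a -> isA b -> isA (join a b)) /\ (isB a -> isB b -> isB (join a b)) /\
  (isN a -> isN b -> isN (join a b)).
Proof.
  induction 1; intros b0 Hb.
  - simpl. repeat split; auto; intros Hn; inversion Hn.
  - simpl. repeat split; auto; intros Hn; inversion Hn.
  - inversion Hb; subst; simpl; repeat split; auto.
  - inversion Hb; subst; simpl.
    + repeat split; auto.
    + destruct (IHle_s _ H2) as [IA _].
      repeat split; intros Hx Hy.
      * apply A_B, B_lam. apply IA; apply isA_lam; auto.
      * apply B_lam. apply IA; apply isA_lam; apply A_B; auto.
      * inversion Hx.
  - inversion Hb; subst.
    + simpl in *; contradiction.
    + destruct (IHle_s1 _ H4) as [IA1 [IB1 IN1]]. destruct (IHle_s2 _ H5) as [IA2 [IB2 IN2]].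
      match goal with |- context[join (App a1 a2) ?B] =>
        assert (HN : isN (App a1 a2) -> isN B -> isN (join (App a1 a2) B)) end.
      { intros Ha Hb'. inversion Ha; subst; inversion Hb'; subst.
        - vv. simpl. apply N_head. apply IB2; auto.
        - kill.
        - kill.
        - simpl. apply N_app; [apply IN1|apply IA2]; auto. }
      repeat split.
      * intros Ha Hb'. inversion Ha; subst; inversion Hb'; subst.
        -- apply A_B, B_neu. apply HN; [inversion H1|inversion H2]; auto.
        -- killA.
        -- killA.
        -- simpl. apply A_C; [|apply IN2; auto]. apply isA_lam.
           apply IA1; apply A_B, B_lam; auto.
      * intros Ha Hb'. apply B_neu. apply HN; [inversion Ha|inversion Hb']; auto.
      * auto.
Qed.
Lemma mono_red : forall N N', red N N' -> forall A, isA A -> le_s A N -> le_s A N'.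
Proof. induction 1; intros; eauto using mono_step. Qed.

Theorem proposition2p7 : forall M : term, bot_free M ->
  (forall A, ~ approx M A) \/ ideal (approx M).
Proof.
  intros M Hbf.
  destruct (classic (exists A, approx M A)) as [Hex|Hn].
  2: { left. intros A HA. apply Hn. exists A; auto. }
  right. split; [auto|split].
  - intros A1 A2 [HA1 [N1 [Hb1 [Hr1 Hl1]]]] [HA2 [N2 [Hb2 [Hr2 Hl2]]]].
    destruct (confluence _ _ _ Hr1 Hr2) as [N3 [H13 H23]].
    apply le_bot_s in Hl1. apply le_bot_s in Hl2.
    pose proof (mono_red _ _ H13 _ HA1 Hl1) as L1.
    pose proof (mono_red _ _ H23 _ HA2 Hl2) as L2.
    destruct (join_le _ _ L1 _ L2) as [J1 [J2 J3]].
    destruct (join_is _ _ L1 _ L2) as [IA _].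
    exists (join A1 A2). split; [split|split; apply le_s_bot; auto].
    + apply IA; auto.
    + exists N3. split; [eapply bf_red; eauto|split].
      * eapply rt_trans; eauto.
      * apply le_s_bot; auto.
  - intros A A' [HA [N [Hb [Hr Hl]]]] HA' Hle.
    split; auto. exists N. split; auto. split; auto. eapply le_trans; eauto.
Qed.
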